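(* Let $\lambda>0$ and $f:\mathbb{R}^n\to\mathbb{R}$ be twice continuously differentiable. Suppose there exist sequences $\{\varepsilon_g^k\}\downarrow0$, $\{\varepsilon_h^k\}\downarrow0$, a sequence $\{w^k\}\to w^*$, and a sequence $\{t_k\}\subseteq[t_{\min},t_{\max}]$ with $0<t_{\min}\le t_{\max}<+\infty$, such that for each $k$, $w^k$ is a strong $(\varepsilon_g^k,\varepsilon_h^k)$-2o point with respect to $t_k$, i.e. $\|\mathcal{G}_{t_k}(w^k)\|\le\varepsilon_g^k$ and $\lambda_{\min}((\nabla^2f(w^k))_{I^k_{\neq0}})\ge-\varepsilon_h^k$, where $I^k_{\neq0}=\{i:w^k_i\neq0\}$. Then $w^*$ satisfies $0\in\nabla f(w^* )+\lambda\partial\|w^*\|_1$ and $z^\top\nabla^2f(w^* )z\ge0$ for all $z\in\mathcal{C}(w^* )=\{z:z_i=0\text{ if }w^*_i=0\}$.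
   Context: $\mathcal{G}_t(x):=t(x-\mathrm{prox}_{\frac\lambda t\|\cdot\|_1}(x-\frac1t\nabla f(x)))$, where $\mathrm{prox}_h(z)=\arg\min_x\{h(x)+\frac12\|x-z\|^2\}$. For a symmetric matrix $A$ and index set $J$, $A_J$ is the principal submatrix indexed by $J$. *)

(* Defs.v *)
(* R^n is modelled as 'rV[R]_n. *)
From HB Require Import structures.
From mathcomp Require Import all_boot all_order all_algebra.
From mathcomp Require Import all_classical all_reals all_analysis.
Set Implicit Arguments. Unset Strict Implicit. Unset Printing Implicit Defensive.
Import Order.TTheory GRing.Theory Num.Theory.
Import numFieldNormedType.Exports.
Local Open Scope classical_set_scope.
Local Open Scope ring_scope.

Section Defs.
Variables (R : realType) (n : nat).
Implicit Types (x y z : 'rV[R]_n) (f : 'rV[R]_n -> R).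

Definition evec (i : 'I_n) : 'rV[R]_n := delta_mx 0 i.

Definition pderiv f (i : 'I_n) : 'rV[R]_n -> R := fun x => 'D_(evec i) f x.

Definition C2 f : Prop :=
  continuous f /\
  (forall i x, derivable f x (evec i)) /\
  (forall i, continuous (pderiv f i)) /\
  (forall i j x, derivable (pderiv f i) x (evec j)) /\
  (forall i j, continuous (pderiv (pderiv f i) j)).

Definition grad f x : 'rV[R]_n := \row_i pderiv f i x.
Definition hess f x : 'M[R]_n := \matrix_(i, j) pderiv (pderiv f i) j x.

Definition enorm x : R := Num.sqrt (\sum_i x 0 i ^+ 2).
Definition l1norm x : R := \sum_i `| x 0 i |.
Definition dotv x y : R := \sum_i x 0 i * y 0 i.

Definition is_argmin_prox (h : 'rV[R]_n -> R) z (p : 'rV[R]_n) : Prop :=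
  forall x, h p + 2^-1 * enorm (p - z) ^+ 2 <= h x + 2^-1 * enorm (x - z) ^+ 2.
Definition prox (h : 'rV[R]_n -> R) z : 'rV[R]_n := xget 0 (is_argmin_prox h z).

Definition gradmap f (lam t : R) x : 'rV[R]_n :=
  t *: (x - prox (fun y => (lam / t) * l1norm y) (x - t^-1 *: grad f x)).

Definition subdiff (h : 'rV[R]_n -> R) x : set 'rV[R]_n :=
  [set v | forall y, h x + dotv v (y - x) <= h y].

Definition psubmx (A : 'M[R]_n) (J : {set 'I_n}) : 'M[R]_#|J| :=
  \matrix_(i, j) A (enum_val i) (enum_val j).

Definition lambda_min_ge m (A : 'M[R]_m) (c : R) : Prop :=
  forall a, eigenvalue A a -> c <= a.

Definition nzset x : {set 'I_n} := [set i | x 0 i != 0].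

End Defs.

(* Main.v *)
Require Import Defs.
From HB Require Import structures.
From mathcomp Require Import all_boot all_order all_algebra.
From mathcomp Require Import all_classical all_reals all_analysis.
From mathcomp Require Import ring lra.
Set Implicit Arguments. Unset Strict Implicit. Unset Printing Implicit Defensive.
Import Order.TTheory GRing.Theory Num.Theory.
Import numFieldNormedType.Exports.
Local Open Scope classical_set_scope.
Local Open Scope ring_scope.
Section LA.
Variable R : realType.

Definition qf m (A : 'M[R]_m) (x y : 'rV[R]_m) : R := (x *m A *m y^T) 0 0.
Definition nx m (x : 'rV[R]_m) : R := \sum_i x 0 i ^+ 2.

Lemma qfE m (A : 'M[R]_m) x y :
  qf A x y = \sum_i \sum_j x 0 i * A i j * y 0 j.
Proof.
rewrite /qf mxE [RHS]exchange_big; apply: eq_bigr => j _.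
rewrite mxE big_distrl; apply: eq_bigr => i _ /=. by rewrite !mxE.
Qed.

Lemma qf_sym m (A : 'M[R]_m) x y : A^T = A -> qf A x y = qf A y x.
Proof.
move=> hA; rewrite /qf.
transitivity ((x *m A *m y^T)^T 0 0); first by rewrite [RHS]mxE.
rewrite !trmx_mul trmxK hA mulmxA; reflexivity.
Qed.

Lemma qfDl m (A : 'M[R]_m) x1 x2 y : qf A (x1 + x2) y = qf A x1 y + qf A x2 y.
Proof. by rewrite /qf !mulmxDl mxE. Qed.
Lemma qfDr m (A : 'M[R]_m) x y1 y2 : qf A x (y1 + y2) = qf A x y1 + qf A x y2.
Proof. by rewrite /qf linearD /= mulmxDr mxE. Qed.
Lemma qfZl m (A : 'M[R]_m) s x y : qf A (s *: x) y = s * qf A x y.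
Proof. by rewrite /qf -!scalemxAl mxE. Qed.
Lemma qfZr m (A : 'M[R]_m) s x y : qf A x (s *: y) = s * qf A x y.
Proof. by rewrite /qf linearZ /= -scalemxAr mxE. Qed.

Lemma nx_ge0 m (x : 'rV[R]_m) : 0 <= nx x.
Proof. by apply: sumr_ge0 => i _; rewrite sqr_ge0. Qed.

Lemma nx_coord m (x : 'rV[R]_m) i : x 0 i ^+ 2 <= nx x.
Proof.
rewrite /nx (bigD1 i) //= lerDl; apply: sumr_ge0 => j _; exact: sqr_ge0.
Qed.

Lemma nx_gt0 m (x : 'rV[R]_m) : x != 0 -> 0 < nx x.
Proof.
move=> hx; have [i hi] : exists i, x 0 i != 0.
  apply/existsP; apply: contraNT hx; rewrite negb_exists => /forallP h.
  by apply/eqP/rowP => i; rewrite mxE; apply/eqP; have := h i; rewrite negbK.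
apply: (lt_le_trans _ (nx_coord x i)).
by rewrite lt_def sqr_ge0 andbT sqrf_eq0 hi.
Qed.

Lemma qf1 m (x : 'rV[R]_m) : qf 1%:M x x = nx x.
Proof. by rewrite /qf mulmx1 mxE; apply: eq_bigr => i _; rewrite mxE expr2. Qed.

Definition Kn m (A : 'M[R]_m) : R := \sum_i \sum_j `|A i j|.

Lemma qf_bound m (A : 'M[R]_m) x : `|qf A x x| <= Kn A * nx x.
Proof.
rewrite qfE /Kn mulr_suml; apply: (le_trans (ler_norm_sum _ _ _)).
apply: ler_sum => i _; rewrite mulr_suml.
apply: (le_trans (ler_norm_sum _ _ _)); apply: ler_sum => j _.
have hi := nx_coord x i; have hj := nx_coord x j.
rewrite normrM normrM.
have hA := normr_ge0 (A i j).
have : `|x 0 i| * `|x 0 j| <= nx x.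
  rewrite -(real_normK (num_real (x 0 i))) in hi.
  rewrite -(real_normK (num_real (x 0 j))) in hj.
  have := normr_ge0 (x 0 i); have := normr_ge0 (x 0 j).
  case: (lerP `|x 0 i| `|x 0 j|) => h; nra.
move=> h; nra.
Qed.


Lemma qf0 m (A : 'M[R]_m) : qf A 0 0 = 0.
Proof. by rewrite /qf !mul0mx mxE. Qed.

Lemma nx0 m : nx (0 : 'rV[R]_m) = 0.
Proof. by rewrite /nx big1 // => i _; rewrite mxE expr2 mulr0. Qed.

Lemma cs_psd m (C : 'M[R]_m) x y : C^T = C -> (forall z, 0 <= qf C z z) ->
  qf C x y ^+ 2 <= qf C x x * qf C y y.
Proof.
move=> hC psd.
have h s : 0 <= qf C x x + 2 * s * qf C x y + s ^+ 2 * qf C y y.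
  have := psd (x + s *: y).
  rewrite !qfDl !qfDr !qfZl !qfZr (qf_sym x y hC) => H; apply: (le_trans H).
  by rewrite le_eqVlt; apply/orP; left; apply/eqP; ring.
set a := qf C x x in h *; set b := qf C x y in h *; set c := qf C y y in h *.
have ha : 0 <= a := psd x; have hc : 0 <= c := psd y.
clearbody a b c; clear hC psd.
have [c0|cpos] := eqVneq c 0.
  rewrite c0 mulr0.
  have [b0|bn0] := eqVneq b 0; first by rewrite b0 expr2 mulr0.
  have := h (- (a + 1) / (2 * b)); rewrite c0 mulr0 addr0.
  have -> : 2 * (- (a + 1) / (2 * b)) * b = - (a + 1).
    by field.
  lra.
have cgt : 0 < c by rewrite lt_def cpos hc.
have := h (- b / c).
have -> : a + 2 * (- b / c) * b + (- b / c) ^+ 2 * c = a - b ^+ 2 / c.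
  by field.
rewrite subr_ge0 ler_pdivrMr // => hh; rewrite mulrC; exact: hh.
Qed.

Lemma qf_subsc m (B : 'M[R]_m) mu z : qf (B - mu%:M) z z = qf B z z - mu * nx z.
Proof.
rewrite -qf1 /qf mulmxBr mul_mx_scalar mulmxBl -scalemxAl mulmx1 !mxE.
reflexivity.
Qed.

Lemma psd_of_eig m (B : 'M[R]_m) c : B^T = B ->
  (forall a, eigenvalue B a -> c <= a) -> forall x, c * nx x <= qf B x x.
Proof.
move=> hB hE x.
have [->|hx] := eqVneq x 0; first by rewrite qf0 nx0 mulr0.
pose S := [set r | exists2 z, z != 0 & r = qf B z z / nx z].
have lbS : has_lbound S.
  exists (- Kn B) => r [z hz ->].
  rewrite ler_pdivlMr ?nx_gt0 //.
  have := qf_bound B z; rewrite ler_norml => /andP[h _].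
  by rewrite mulNr.
have neS : S !=set0 by exists (qf B x x / nx x); exists x.
pose mu := inf S.
have hmu z : mu * nx z <= qf B z z.
  have [->|hz] := eqVneq z 0; first by rewrite qf0 nx0 mulr0.
  rewrite -ler_pdivlMr ?nx_gt0 //; apply: (ge_inf lbS); by exists z.
pose C := B - mu%:M.
have hC : C^T = C by rewrite /C linearB /= tr_scalar_mx hB.
have psd z : 0 <= qf C z z by rewrite qf_subsc subr_ge0.
have detC : \det C == 0.
  apply/negPn/negP => hdet.
  have uC : C \in unitmx by rewrite unitmxE unitfE.
  pose M := invmx C.
  have key z : z != 0 -> nx z <= qf C z z * Kn M^T.
    move=> hz; have nz := nx_gt0 hz.
    pose y := z *m M^T.
    have e1 : qf C z y = nx z.
      by rewrite -qf1 /qf /y trmx_mul trmxK mulmxA -(mulmxA z C M) mulmxV // mulmx1.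
    have e2 : qf C y y = qf M^T z z.
      rewrite /qf /y trmx_mul trmxK !mulmxA -(mulmxA _ C M) mulmxV // mulmx1.
      reflexivity.
    have := cs_psd z y hC psd; rewrite e1 e2 => h.
    have hb := qf_bound M^T z; rewrite ler_norml in hb; case/andP: hb => _ hb.
    have := psd z => hp.
    have : nx z * nx z <= qf C z z * (Kn M^T * nx z).
      by rewrite -expr2; apply: le_trans h _; apply: ler_wpM2l.
    by rewrite mulrA ler_pM2r.
  clear hB hC.
  have Kpos : 0 < Kn M^T.
    have := key x hx; have := nx_gt0 hx; have := psd x.
    have : 0 <= Kn M^T by apply: sumr_ge0 => i _; apply: sumr_ge0 => j _.
    move=> h0 h1 h2 h3; rewrite lt_def h0 andbT; apply/eqP => h4.
    by rewrite h4 mulr0 in h3; lra.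
  have : mu + (Kn M^T)^-1 <= mu.
    apply: lb_le_inf => // r [z hz ->].
    rewrite ler_pdivlMr ?nx_gt0 //.
    have := key z hz; rewrite qf_subsc => h.
    have : nx z / Kn M^T <= qf B z z - mu * nx z.
      by rewrite ler_pdivrMr.
    rewrite mulrDl [_^-1 * _]mulrC; lra.
  have : 0 < (Kn M^T)^-1 by rewrite invr_gt0.
  lra.
have hev : eigenvalue B mu.
  case/det0P: detC => v hv hvC; apply/eigenvalueP; exists v => //.
  apply/eqP; rewrite -subr_eq0 -mul_mx_scalar -mulmxBr; exact/eqP.
have := hE _ hev => hc.
apply: le_trans (hmu x); apply: ler_wpM2r => //; exact: nx_ge0.
Qed.

Lemma sum_supp n (J : {set 'I_n}) (F : 'I_n -> R) :
  (forall i, i \notin J -> F i = 0) ->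
  \sum_i F i = \sum_(k < #|J|) F (enum_val k).
Proof.
move=> hF; rewrite (bigID (fun i => i \in J)) /= [X in _ + X]big1 ?addr0.
  by rewrite big_enum_val.
by move=> i hi; apply: hF.
Qed.

Lemma psub_quad n (A : 'M[R]_n) (J : {set 'I_n}) c (z : 'rV[R]_n) :
  A^T = A -> lambda_min_ge (psubmx A J) c ->
  (forall i, i \notin J -> z 0 i = 0) -> c * nx z <= qf A z z.
Proof.
move=> hA hl hz.
pose x : 'rV[R]_#|J| := \row_k z 0 (enum_val k).
have hs : (psubmx A J)^T = psubmx A J.
  apply/matrixP => i j; rewrite !mxE.
  by have := congr1 (fun M : 'M[R]_n => M (enum_val j) (enum_val i)) hA; rewrite mxE.
have := psd_of_eig hs hl x.
have -> : nx x = nx z.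
  rewrite /nx (sum_supp (J := J)); last by move=> i hi; rewrite hz //; ring.
  by apply: eq_bigr => k _; rewrite mxE.
have -> : qf (psubmx A J) x x = qf A z z.
  rewrite !qfE (sum_supp (J := J)); last first.
    by move=> i hi; rewrite big1 // => j _; rewrite hz // !mul0r.
  apply: eq_bigr => k _.
  rewrite (sum_supp (J := J)); last by move=> j hj; rewrite (hz j hj) mulr0.
  by apply: eq_bigr => l _; rewrite !mxE.
by [].
Qed.

End LA.
Section PX.
Variable R : realType.

Definition soft (c z : R) : R := if c < z then z - c else if z < - c then z + c else 0.

Lemma soft_opt c z r : 0 <= c ->
  c * `|soft c z| + 2^-1 * (soft c z - z) ^+ 2 + 2^-1 * (r - soft c z) ^+ 2
  <= c * `|r| + 2^-1 * (r - z) ^+ 2.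
Proof.
move=> hc; rewrite /soft.
case: (ltrP c z) => h1.
  rewrite (ger0_norm (ltW _)) ?subr_gt0 //.
  case: (lerP 0 r) => hr; [rewrite (ger0_norm hr) | rewrite (ltr0_norm hr)]; nra.
case: (ltrP z (- c)) => h2.
  rewrite (ltr0_norm _); last lra.
  case: (lerP 0 r) => hr; [rewrite (ger0_norm hr) | rewrite (ltr0_norm hr)]; nra.
rewrite normr0 mulr0.
case: (lerP 0 r) => hr; [rewrite (ger0_norm hr) | rewrite (ltr0_norm hr)]; nra.
Qed.

Lemma soft_sub c z : 0 < c ->
  `|z - soft c z| <= c /\ (z - soft c z) * soft c z = c * `|soft c z|.
Proof.
move=> hc; rewrite /soft.
case: ifP => h1.
  have -> : z - (z - c) = c by ring.
  rewrite (ger0_norm (ltW hc)) (ger0_norm (x := z - c)); last by rewrite subr_ge0 ltW.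
  split; [exact: lexx | ring].
case: ifP => h2.
  have -> : z - (z + c) = - c by ring.
  rewrite normrN (gtr0_norm hc) (ltr0_norm (x := z + c)); last lra.
  by split; [exact: lexx | ring].
rewrite subr0 normr0 mulr0 mulr0; split => //.
rewrite ler_norml; apply/andP; split; rewrite leNgt ?h1 ?h2 //.
Qed.

Lemma enorm_sq n (x : 'rV[R]_n) : enorm x ^+ 2 = \sum_i x 0 i ^+ 2.
Proof. by rewrite /enorm sqr_sqrtr // sumr_ge0 // => i _; apply: sqr_ge0. Qed.

Lemma enorm_coord n (x : 'rV[R]_n) i : `|x 0 i| <= enorm x.
Proof.
rewrite /enorm -sqrtr_sqr ler_sqrt; last by rewrite sumr_ge0 // => j _; apply: sqr_ge0.
rewrite (bigD1 i) //= lerDl; apply: sumr_ge0 => j _; exact: sqr_ge0.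
Qed.

Lemma prox_soft n c (z : 'rV[R]_n) : 0 < c ->
  prox (fun y => c * l1norm y) z = \row_i soft c (z 0 i).
Proof.
move=> hc.
have ex : exists p, is_argmin_prox (fun y => c * l1norm y) z p.
  exists (\row_i soft c (z 0 i)) => x.
  rewrite !enorm_sq /l1norm !mulr_sumr -!big_split /=.
  apply: ler_sum => i _; rewrite !mxE.
  have := soft_opt (z 0 i) (x 0 i) (ltW hc).
  have : 0 <= 2^-1 * (x 0 i - soft c (z 0 i)) ^+ 2.
    by rewrite mulr_ge0 ?sqr_ge0 // invr_ge0.
  lra.
have := xgetPex 0 ex; rewrite -/(prox _ z).
set p := prox _ z => hp.
apply/rowP => i; rewrite mxE.
pose s := soft c (z 0 i).
pose x := \row_j if j == i then s else p 0 j.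
have := hp x.
rewrite !enorm_sq /l1norm !mulr_sumr -!big_split /=.
rewrite (bigD1 i) //= [X in _ <= X](bigD1 i) //=.
have -> : \sum_(j < n | j != i) (c * `|x 0 j| + 2^-1 * (x - z) 0 j ^+ 2) =
          \sum_(j < n | j != i) (c * `|p 0 j| + 2^-1 * (p - z) 0 j ^+ 2).
  by apply: eq_bigr => j hj; rewrite !mxE (negbTE hj).
rewrite !mxE eqxx lerD2r => h.
have := soft_opt (z 0 i) (p 0 i) (ltW hc); rewrite -/s => h2.
have : (p 0 i - s) ^+ 2 <= 0 by nra.
move=> h3; have : (p 0 i - s) ^+ 2 == 0 by rewrite eq_le h3 sqr_ge0.
by rewrite sqrf_eq0 subr_eq0 => /eqP.
Qed.

End PX.
Section SW.
Variables (R : realType) (n : nat).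
Implicit Types (f : 'rV[R]_n -> R).

Lemma line_derive (g : 'rV[R]_n -> R) y v a : derivable g (a *: v + y) v ->
  is_derive a 1 (fun s : R => g (s *: v + y)) ('D_v g (a *: v + y)).
Proof.
move=> hd.
have E : (fun h : R => h^-1 *: (((fun s : R => g (s *: v + y)) \o shift a) (h *: 1)
             - (fun s : R => g (s *: v + y)) a)) =
         (fun h : R => h^-1 *: ((g \o shift (a *: v + y)) (h *: v) - g (a *: v + y))).
  apply: funext => h /=; congr (_ *: (g _ - _)).
  by rewrite /shift /= [_%:A]mulr1 scalerDl addrA.
split; first by rewrite /derivable E.
by rewrite /derive E.
Qed.

Lemma shift_derive (g : 'rV[R]_n -> R) c p v : derivable g (c + p) v ->
  is_derive p v (fun z => g (c + z)) ('D_v g (c + p)).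
Proof.
move=> hd.
have E : (fun h : R => h^-1 *: (((fun z => g (c + z)) \o shift p) (h *: v)
             - (fun z => g (c + z)) p)) =
         (fun h : R => h^-1 *: ((g \o shift (c + p)) (h *: v) - g (c + p))).
  apply: funext => h /=; congr (_ *: (g _ - _)).
  by rewrite /shift /= addrCA.
split; first by rewrite /derivable E.
by rewrite /derive E.
Qed.

Lemma mvt_line (g : 'rV[R]_n -> R) y v h : 0 < h ->
  (forall a, derivable g (a *: v + y) v) ->
  exists2 c, 0 < c < h & g (h *: v + y) - g y = h * 'D_v g (c *: v + y).
Proof.
move=> hh hd.
have hD (s : R) : is_derive s (1 : R) (fun s : R => g (s *: v + y)) ('D_v g (s *: v + y)).
  exact: (line_derive (hd s)).
have hc : {within `[0, h], continuous (fun s : R => g (s *: v + y))}.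
  apply: derivable_within_continuous => s _.
  by have [] := hD s.
have [c hc1 hc2] := MVT hh (fun s _ => hD s) hc.
exists c; first by move: hc1; rewrite in_itv.
by move: hc2; rewrite scale0r add0r subr0 mulrC.
Qed.

Lemma claimA f x i j h :
  (forall i x, derivable f x (evec R i)) ->
  (forall i j x, derivable (pderiv f i) x (evec R j)) -> 0 < h ->
  exists xi, exists eta, [/\ 0 < xi < h, 0 < eta < h &
  f (h *: evec R j + (h *: evec R i + x)) - f (h *: evec R i + x) - f (h *: evec R j + x) + f x
  = h * (h * pderiv (pderiv f i) j (eta *: evec R j + (xi *: evec R i + x)))].
Proof.
move=> d1 d2 hh.
pose g := (fun z => f (h *: evec R j + z)) - f.
have gD p : is_derive p (evec R i) g (pderiv f i (h *: evec R j + p) - pderiv f i p).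
  apply: is_deriveB; first exact: (shift_derive (d1 _ _)).
  exact: derivableP.
have [xi hxi E1] := mvt_line (g := g) (y := x) (v := evec R i) hh (fun a => @ex_derive _ _ _ _ _ _ _ (gD (a *: evec R i + x))).
have [_ hv] := gD (xi *: evec R i + x); rewrite hv in E1.
have [eta heta E2] := mvt_line (g := pderiv f i) (y := xi *: evec R i + x) (v := evec R j) hh (fun a => d2 i j (a *: evec R j + (xi *: evec R i + x))).
exists xi, eta; split => //.
rewrite -/(pderiv (pderiv f i) j _) in E2.
have gE z : g z = f (h *: evec R j + z) - f z by [].
rewrite -E2 -E1 !gE; ring.
Qed.

Lemma ball_pt (x : 'rV[R]_n) i j (xi eta h d : R) :
  0 < xi < h -> 0 < eta < h -> h + h <= d ->
  ball x d (eta *: evec R j + (xi *: evec R i + x)).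
Proof.
move=> /andP[h1 h2] /andP[h3 h4] hd; split; first lra.
move=> a b; rewrite /ball /= !mxE.
case: ((a == 0) && (b == j)); case: ((a == 0) && (b == i)); rewrite /=.
- have -> : x a b - (eta * 1 + (xi * 1 + x a b)) = - (eta + xi) by ring.
  rewrite normrN gtr0_norm; lra.
- have -> : x a b - (eta * 1 + (xi * 0 + x a b)) = - eta by ring.
  rewrite normrN gtr0_norm; lra.
- have -> : x a b - (eta * 0 + (xi * 1 + x a b)) = - xi by ring.
  rewrite normrN gtr0_norm; lra.
- have -> : x a b - (eta * 0 + (xi * 0 + x a b)) = 0 by ring.
  rewrite normr0; lra.
Qed.

Lemma eq_of_close (a b : R) : (forall e, 0 < e -> `|a - b| < e + e) -> a = b.
Proof.
move=> key; apply/eqP; apply: contraT => hne.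
have hp : 0 < `|a - b| by rewrite normr_gt0 subr_eq0.
have := key (`|a - b| / 4) (divr_gt0 hp (ltr0Sn _ _)); lra.
Qed.
Lemma swap4 (a b c d : R) : a - b - c + d = a - c - b + d.
Proof. ring. Qed.
Lemma fin3 (a b c e : R) : `|a - c| < e -> `|b - c| < e -> `|a - b| < e + e.
Proof.
move=> h1 h2; have := ler_distD c a b; rewrite (distrC c b) => h3; lra.
Qed.
Lemma schwarz f : C2 f -> forall x i j,
  pderiv (pderiv f i) j x = pderiv (pderiv f j) i x.
Proof.
move=> [_ [d1 [_ [d2 c2]]]] x i j.
apply: eq_of_close => e he.
move: (c2 i j x) => /cvgrPdist_lt /(_ e he) /nbhs_ballP [r1 hr1 B1].
move: (c2 j i x) => /cvgrPdist_lt /(_ e he) /nbhs_ballP [r2 hr2 B2].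
pose h := Num.min r1 r2 / 2.
have hm1 : Num.min r1 r2 <= r1 by rewrite ge_min lexx.
have hm2 : Num.min r1 r2 <= r2 by rewrite ge_min lexx orbT.
have hm0 : 0 < Num.min r1 r2 by rewrite lt_min hr1 hr2.
have hh : 0 < h by rewrite /h divr_gt0.
have hh2 : h + h = Num.min r1 r2 by rewrite /h; field.
have [xi [eta [hxi heta E1]]] := claimA x i j d1 d2 hh.
have [xi' [eta' [hxi' heta' E2]]] := claimA x j i d1 d2 hh.
set P := eta *: evec R j + (xi *: evec R i + x) in E1.
set Q := eta' *: evec R i + (xi' *: evec R j + x) in E2.
have hn : h != 0 := lt0r_neq0 hh.
have E3 : f (h *: evec R j + (h *: evec R i + x)) - f (h *: evec R i + x) - f (h *: evec R j + x) + f x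
  = f (h *: evec R i + (h *: evec R j + x)) - f (h *: evec R j + x) - f (h *: evec R i + x) + f x.
  rewrite [h *: evec R i + (h *: evec R j + x)]addrCA; exact: swap4.
have EPQ : pderiv (pderiv f i) j P = pderiv (pderiv f j) i Q.
  by move: (etrans (esym E1) (etrans E3 E2)) => /(mulfI hn) /(mulfI hn).
have hh1 : h + h <= r1 by rewrite hh2.
have hh3 : h + h <= r2 by rewrite hh2.
have hP := B1 P (ball_pt x i j hxi heta hh1).
have hQ := B2 Q (ball_pt x j i hxi' heta' hh3).
rewrite /= EPQ in hP.
exact: fin3 hP hQ.
Qed.
End SW.
Section MN.
Variable R : realType.

Lemma sq0 (u v : nat -> R) : v @ \oo --> 0 -> (forall k, `|u k| <= v k) -> u @ \oo --> 0.
Proof.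
move=> hv hu; apply: (@squeeze_cvgr _ _ _ _ (fun k => - v k) v) => //.
- by near=> k; have := hu k; rewrite ler_norml.
- by rewrite -oppr0; apply: cvgN.
Unshelve. all: end_near.
Qed.

Lemma le_of_cvg (u : nat -> R) l c : u @ \oo --> l ->
  (\forall k \near \oo, u k <= c) -> l <= c.
Proof.
move=> hu hn; have h := limr_le (cvgP _ hu) hn.
have hp : ProperFilter (\oo : set_system nat) by exact: _.
by move: (h hp); rewrite (cvg_lim _ hu).
Qed.

Lemma ge_of_cvg (u : nat -> R) l c : u @ \oo --> l ->
  (\forall k \near \oo, c <= u k) -> c <= l.
Proof.
move=> hu hn; have h := limr_ge (cvgP _ hu) hn.
have hp : ProperFilter (\oo : set_system nat) by exact: _.
by move: (h hp); rewrite (cvg_lim _ hu).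
Qed.

Lemma coord_cvg n (w : nat -> 'rV[R]_n) (ws : 'rV[R]_n) i : w @ \oo --> ws ->
  (fun k => w k 0 i) @ \oo --> ws 0 i.
Proof.
move=> hw; exact: (@cvg_comp _ _ _ w (fun M : 'rV[R]_n => M 0 i) _ _ _ hw (@coord_continuous R 1 n 0 i ws)).
Qed.

Lemma sum_cvg m (F : 'I_m -> nat -> R) L : (forall i, F i @ \oo --> L i) ->
  (fun k => \sum_i F i k) @ \oo --> \sum_i L i.
Proof.
move=> hF; apply: cvg_big => //; first exact: add_continuous.
Qed.

End MN.

Unset Implicit Arguments.

Theorem lemma1 (R : realType) (n : nat) (lam : R) (f : 'rV[R]_n -> R)
  (eg eh : nat -> R) (w : nat -> 'rV[R]_n) (wstar : 'rV[R]_n)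
  (t : nat -> R) (tmin tmax : R) :
  0 < lam -> C2 f ->
  (forall k, eg k.+1 <= eg k) -> eg @ \oo --> 0 ->
  (forall k, eh k.+1 <= eh k) -> eh @ \oo --> 0 ->
  w @ \oo --> wstar ->
  0 < tmin -> tmin <= tmax ->
  (forall k, tmin <= t k <= tmax) ->
  (forall k, enorm (gradmap f lam (t k) (w k)) <= eg k /\
             lambda_min_ge (psubmx (hess f (w k)) (nzset (w k))) (- eh k)) ->
  (exists v, v \in subdiff (@l1norm R n) wstar /\ grad f wstar + lam *: v = 0) /\
  (forall z : 'rV[R]_n, (forall i, wstar 0 i = 0 -> z 0 i = 0) ->
     0 <= (z *m hess f wstar *m z^T) 0 0).
Proof.
move=> hlam hf _ heg _ heh hw htmin htle ht H.
have hf' := hf; case: hf' => [_ [d1 [cp [d2 c2]]]].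
have tpos k : 0 < t k by case/andP: (ht k) => h _; exact: lt_le_trans htmin h.
pose z k := w k - (t k)^-1 *: grad f (w k).
pose p k : 'rV[R]_n := \row_i soft (lam / t k) (z k 0 i).
have hG k : gradmap f lam (t k) (w k) = t k *: (w k - p k).
  by rewrite /gradmap (prox_soft _ (divr_gt0 hlam (tpos k))).
pose Gi i k := gradmap f lam (t k) (w k) 0 i.
have hGi i k : Gi i k = t k * (w k 0 i - p k 0 i).
  by rewrite /Gi hG !mxE.
have hGcvg i : Gi i @ \oo --> 0.
  apply: (sq0 heg) => k; apply: le_trans (proj1 (H k)); exact: enorm_coord.
have gcvg i : (fun k => pderiv f i (w k)) @ \oo --> pderiv f i wstar.
  exact: (@cvg_comp _ _ _ w (pderiv f i) _ _ _ hw (cp i wstar)).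
have hpcvg i : (fun k => p k 0 i) @ \oo --> wstar 0 i.
  have -> : (fun k => p k 0 i) = (fun k => w k 0 i - Gi i k / t k).
    apply: funext => k; rewrite hGi; field; exact: lt0r_neq0 (tpos k).
  rewrite -[X in _ --> X]subr0; apply: cvgB; first exact: coord_cvg.
  have h0 : (fun k => eg k / tmin) @ \oo --> 0.
    by rewrite -(mul0r tmin^-1); apply: cvgMr_tmp.
  apply: (sq0 h0) => k; rewrite normrM normfV (gtr0_norm (tpos k)).
  rewrite ler_pdivrMr // mulrC mulrA ler_pdivlMr //.
  have e1 : `|Gi i k| <= eg k.
    apply: le_trans (proj1 (H k)); exact: enorm_coord.
  have e2 : tmin <= t k by case/andP: (ht k).
  have e3 : 0 <= `|Gi i k| := normr_ge0 _.
  nra.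
pose vi i k := (Gi i k - pderiv f i (w k)) / lam.
pose vstar i := (0 - pderiv f i wstar) / lam.
have hvcvg i : vi i @ \oo --> vstar i.
  by apply: cvgMr_tmp; apply: cvgB.
have hvprop i k : `|vi i k| <= 1 /\ vi i k * p k 0 i = `|p k 0 i|.
  have hc := divr_gt0 hlam (tpos k).
  have [s1 s2] := soft_sub (z k 0 i) hc.
  have hp : p k 0 i = soft (lam / t k) (z k 0 i) by rewrite mxE.
  rewrite -hp in s1 s2.
  have hz : z k 0 i = w k 0 i - (t k)^-1 * pderiv f i (w k) by rewrite !mxE.
  have hv : vi i k = (z k 0 i - p k 0 i) / (lam / t k).
    rewrite /vi hGi hz; field.
    by rewrite lt0r_neq0 // lt0r_neq0 // tpos.
  rewrite hv; split.
    by rewrite normrM normfV (gtr0_norm hc) ler_pdivrMr // mul1r.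
  by rewrite mulrAC s2 mulrAC divff ?mul1r // lt0r_neq0.
have hv1 i : `|vstar i| <= 1.
  apply: (le_of_cvg (cvg_norm (hvcvg i))); apply: nearW => k.
  exact: (proj1 (hvprop i k)).
have hv2 i : vstar i * wstar 0 i = `|wstar 0 i|.
  have hc : (fun k => vi i k * p k 0 i - `|p k 0 i|) @ \oo -->
            vstar i * wstar 0 i - `|wstar 0 i|.
    apply: cvgB; first exact: cvgM.
    exact: cvg_norm.
  apply/eqP; rewrite -subr_eq0 eq_le; apply/andP; split.
    apply: (le_of_cvg hc); apply: nearW => k.
    by rewrite (proj2 (hvprop i k)) subrr.
  apply: (ge_of_cvg hc); apply: nearW => k.
  by rewrite (proj2 (hvprop i k)) subrr.
split.
  exists (\row_i vstar i); split.
    apply/mem_set => y; rewrite /l1norm /dotv -big_split /=.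
    apply: ler_sum => i _; rewrite !mxE mulrBr hv2.
    have := ler_norm (vstar i * y 0 i); rewrite normrM => h1.
    have h2 := hv1 i; have h3 := normr_ge0 (y 0 i).
    have h4 := normr_ge0 (vstar i).
    nra.
  apply/rowP => i; rewrite !mxE /vstar; field; exact: lt0r_neq0.
move=> zz hz.
have hsym x : (hess f x)^T = hess f x.
  apply/matrixP => a b; rewrite !mxE; exact: schwarz.
have ev : \forall k \near \oo, forall i, w k 0 i = 0 -> zz 0 i = 0.
  apply: filter_forall => i.
  have [hi|hi] := eqVneq (wstar 0 i) 0.
    by apply: nearW => k _; exact: hz.
  have hpos : 0 < `|wstar 0 i| by rewrite normr_gt0.
  move: (coord_cvg (i := i) hw) => /cvgrPdist_lt /(_ _ hpos).
  apply: filterS => k hk hwk.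
  by rewrite hwk subr0 ltxx in hk.
have key : \forall k \near \oo, 0 <= qf (hess f (w k)) zz zz + eh k * nx zz.
  apply: filterS ev => k hk.
  have hJ : forall i, i \notin nzset (w k) -> zz 0 i = 0.
    by move=> i; rewrite /nzset inE negbK => /eqP; exact: hk.
  have := psub_quad (hsym (w k)) (proj2 (H k)) hJ.
  rewrite mulNr; lra.
have hq : (fun k => qf (hess f (w k)) zz zz + eh k * nx zz) @ \oo -->
          qf (hess f wstar) zz zz + 0 * nx zz.
  apply: cvgD; last exact: cvgMr_tmp.
  have -> : (fun k => qf (hess f (w k)) zz zz) =
    (fun k => \sum_i \sum_j zz 0 i * pderiv (pderiv f i) j (w k) * zz 0 j).
    apply: funext => k; rewrite qfE; apply: eq_bigr => i _.
    by apply: eq_bigr => j _; rewrite mxE.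
  rewrite qfE.
  have -> : \sum_i \sum_j zz 0 i * hess f wstar i j * zz 0 j =
            \sum_i \sum_j zz 0 i * pderiv (pderiv f i) j wstar * zz 0 j.
    by apply: eq_bigr => i _; apply: eq_bigr => j _; rewrite mxE.
  apply: sum_cvg => i; apply: sum_cvg => j.
  apply: cvgMr_tmp; apply: cvgMl_tmp.
  exact: (@cvg_comp _ _ _ w (pderiv (pderiv f i) j) _ _ _ hw (c2 i j wstar)).
rewrite mul0r addr0 in hq.
change (0 <= qf (hess f wstar) zz zz).
exact: (ge_of_cvg hq key).
Qed.
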